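(* Assume (H1'). Let $\phi$ be an admissible policy and $Y$ a $\mathbb W_2$-valued random variable on $\Omega^0$. If $$\lim_{n\to\infty}\mathbb P^0\Big[\bigcap_{k=0}^{\infty}\bigcup_{l=0}^{n}\mathscr A_l(Y)\cap\theta^k\mathscr A_{l+k}(Y)\Big]=1,$$ then $(U^{[Y]}_n)_{n\ge0}$ converges with strong backwards coupling to a stationary sequence $(U\circ\theta^n)_{n}$, where $U$ is a $\mathbb W_2$-valued solution of $U\circ\theta=(U\odot_\phi(V^0,\Sigma^0))\odot_\phi(V^1,\Sigma^1)$, $\mathbb P^0$-a.s.
   Context: $G=(\mathcal V,\mathcal E)$ finite connected simple graph; $\mathcal S$ the set of lists of preferences (for each class a linear ordering of its neighbours); $\phi$ a matching policy with probability $\nu_\phi$ on $\mathcal S$; $\mathbb W=\{w\in\mathcal V^*:|w|_i|w|_j=0 \text{ whenever } i,j \text{ adjacent}\}$, $\mathbb W_2$ its words of even length; admissible $\phi$: a map $\odot_\phi:\mathbb W\times(\mathcal V\times\mathcal S)\to\mathbb W$, $w\odot_\phi(v,\sigma)=wv$ if no letter of $w$ is adjacent to $v$, else $w$ with one letter adjacent to $v$ (chosen by $\phi$) deleted. (H1'): the sequence $(V_{2n},\Sigma_{2n},V_{2n+1},\Sigma_{2n+1})_{n\in\mathbb Z}$ (classes and preference lists of arriving items) is stationary ergodic, with $V_{2n}\sim\mu^0$, $V_{2n+1}\sim\mu^1$, $\Sigma_m\sim\nu_\phi$, and $\mu=(\mu^0+\mu^1)/2$ has full support. Work on the canonical space $\Omega^0=(\mathcal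 V\times\mathcal S\times\mathcal V\times\mathcal S)^{\mathbb Z}$ with the law $\mathbb P^0$ of this sequence and the shift $\theta((\omega_n)_n)=(\omega_{n+1})_n$; $(V^0,\Sigma^0,V^1,\Sigma^1)$ is the $0$-coordinate projection. For a $\mathbb W_2$-valued r.v. $Y$: $U^{[Y]}_0=Y$, $U^{[Y]}_{n+1}=(U^{[Y]}_n\odot_\phi(V^0\circ\theta^n,\Sigma^0\circ\theta^n))\odot_\phi(V^1\circ\theta^n,\Sigma^1\circ\theta^n)$. $\mathscr A_n(Y)=\{U^{[Y]}_n=\emptyset\}$. $(U^{[Y]}_n)$ converges with strong backwards coupling to $(U\circ\theta^n)$ if a.s. there is $N^*$ with $U^{[Y]}_n\circ\theta^{-n}=U$ for all $n\ge N^*$. *)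

(* Defs.v *)
From HB Require Import structures.
From mathcomp Require Import all_boot all_order all_algebra.
From mathcomp Require Import all_classical all_reals all_analysis.
Set Implicit Arguments. Unset Strict Implicit. Unset Printing Implicit Defensive.
Import Order.TTheory GRing.Theory Num.Theory.
Local Open Scope classical_set_scope.
Local Open Scope ring_scope.

Section MatchingModel.
Variables (V : finType) (adj : rel V).

(* A list of preferences: for each class i, a linear ordering (duplicate-free
   enumeration) of the neighbours of i. *)
Definition pref_ok (s : {ffun V -> seq V}) : bool :=
  [forall i, perm_eq (s i) (enum (adj i))].

Definition Prefs := {s : {ffun V -> seq V} | pref_ok s}.

Lemma pref0_ok : pref_ok [ffun i => enum (adj i)].
Proof. by apply/forallP => i; rewrite ffunE perm_refl. Qed.

Definition pref0 : Prefs := exist (fun s => is_true (pref_ok s)) _ pref0_ok.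

Definition inW (w : seq V) : Prop :=
  forall i j, adj i j -> count_mem i w = 0%N \/ count_mem j w = 0%N.

Definition inW2 (w : seq V) : Prop := inW w /\ ~~ odd (size w).

Definition admissible (odot : seq V -> V * Prefs -> seq V) : Prop :=
  forall (w : seq V) (v : V) (s : Prefs), inW w ->
    (~~ has (adj v) w -> odot w (v, s) = rcons w v) /\
    (has (adj v) w -> exists2 k, (k < size w)%N &
        adj v (nth v w k) /\ odot w (v, s) = take k w ++ drop k.+1 w).

(* one arrival pair (V_{2n}, Sigma_{2n}, V_{2n+1}, Sigma_{2n+1}) *)
Definition Arr := ((V * Prefs) * (V * Prefs))%type.

Variable v0 : V. (* the graph is nonempty; used only to make the space pointed *)

Definition Omega0T (x : V) : Type := int -> Arr.
Let Omega0 := Omega0T v0.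
HB.instance Definition _ := Choice.on (Omega0T v0).
HB.instance Definition _ := isPointed.Build (Omega0T v0) (fun _ => ((v0, pref0), (v0, pref0))).

Definition cyl : set (set (Omega0T v0)) :=
  [set A | exists (n : int) (x : Arr), A = [set om : Omega0T v0 | om n = x]].

Definition Omega := g_sigma_algebraType cyl.

Definition theta (om : Omega) : Omega := fun k => om (k + 1).
Definition thetainv (om : Omega) : Omega := fun k => om (k - 1).
Definition thetan (n : nat) : Omega -> Omega := iter n theta.
Definition thetainvn (n : nat) : Omega -> Omega := iter n thetainv.

Definition V0 (om : Omega) : V := (om 0).1.1.
Definition S0 (om : Omega) : Prefs := (om 0).1.2.
Definition V1 (om : Omega) : V := (om 0).2.1.
Definition S1 (om : Omega) : Prefs := (om 0).2.2.

Section Dyn.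
Variable odot : seq V -> V * Prefs -> seq V.

Definition step (w : seq V) (om : Omega) : seq V :=
  odot (odot w (V0 om, S0 om)) (V1 om, S1 om).

Fixpoint Useq (Y : Omega -> seq V) (n : nat) (om : Omega) : seq V :=
  match n with
  | 0%N => Y om
  | n'.+1 => step (Useq Y n' om) (thetan n' om)
  end.

Definition Aset (Y : Omega -> seq V) (n : nat) : set Omega :=
  [set om | Useq Y n om = [::]].

End Dyn.

(* a seq-valued (discrete, countable codomain) random variable *)
Definition seq_rv (X : Omega -> seq V) : Prop :=
  forall w : seq V, measurable (X @^-1` [set w]).

End MatchingModel.

Arguments theta {V adj v0}.
Arguments thetainv {V adj v0}.
Arguments thetan {V adj v0}.
Arguments thetainvn {V adj v0}.
Arguments V0 {V adj v0}.
Arguments S0 {V adj v0}.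
Arguments V1 {V adj v0}.
Arguments S1 {V adj v0}.
Arguments step {V adj v0}.
Arguments Useq {V adj v0}.
Arguments Aset {V adj v0}.
Arguments seq_rv {V adj v0}.

(* Main.v *)
Require Import Defs.
From HB Require Import structures.
From mathcomp Require Import all_boot all_order all_algebra.
From mathcomp Require Import all_classical all_reals all_analysis.
From mathcomp Require Import zify.
Set Implicit Arguments. Unset Strict Implicit. Unset Printing Implicit Defensive.
Import Order.TTheory GRing.Theory Num.Theory.
Local Open Scope classical_set_scope.
Local Open Scope ring_scope.

Section Aux.
Variables (V : finType) (adj : rel V) (v0 : V).
Local Notation Om := (Omega adj v0).

Lemma thetan_E n (om : Om) : thetan n om = fun k => om (k + n%:Z).
Proof.
elim: n => [|n IH] /=; first by apply: funext => k; rewrite addr0.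
rewrite /thetan /= -/(thetan n om) IH /theta; apply: funext => k.
by f_equal; lia.
Qed.

Lemma thetainvn_E n (om : Om) : thetainvn n om = fun k => om (k - n%:Z).
Proof.
elim: n => [|n IH] /=; first by apply: funext => k; rewrite subr0.
rewrite /thetainvn /= -/(thetainvn n om) IH /thetainv; apply: funext => k.
by f_equal; lia.
Qed.

Lemma thetanK n (om : Om) : thetan n (thetainvn n om) = om.
Proof. by rewrite thetan_E thetainvn_E; apply: funext => k; f_equal; lia. Qed.

Lemma thetainvnK n (om : Om) : thetainvn n (thetan n om) = om.
Proof. by rewrite thetan_E thetainvn_E; apply: funext => k; f_equal; lia. Qed.

Lemma thetainvK (om : Om) : thetainv (theta om) = om.
Proof. by apply: funext => k; rewrite /thetainv /theta; f_equal; lia. Qed.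

Lemma cyl_meas (n : int) (x : Arr adj) : measurable [set om : Om | om n = x].
Proof. by apply: sub_sigma_algebra; exists n, x. Qed.

Lemma thetainv_meas : measurable_fun setT (@thetainv _ adj v0).
Proof.
have h := @measurability _ _ Om Om setT (@thetainv _ adj v0) (@cyl _ adj v0) erefl.
apply: h.
move=> _ [A [n [x ->]] <-]; rewrite setTI.
exact: (cyl_meas (n - 1) x).
Qed.

Lemma thetainvn_pre n (A : set Om) : measurable A ->
  measurable (thetainvn n @^-1` A).
Proof.
elim: n A => [|n IH] A mA //=.
have -> : thetainvn n.+1 @^-1` A = thetainvn n @^-1` (thetainv @^-1` A) by [].
apply: IH; rewrite -[X in measurable X]setTI; exact: thetainv_meas.
Qed.


Definition Fm (T : countType) (X : Om -> T) := forall t, measurable (X @^-1` [set t]).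

Lemma Fm_comb (T1 T2 T3 : countType) (X1 : Om -> T1) (X2 : Om -> T2)
  (g : T1 -> T2 -> T3) : Fm X1 -> Fm X2 -> Fm (fun om => g (X1 om) (X2 om)).
Proof.
move=> h1 h2 t.
pose S (i : nat) : set Om := match (unpickle i : option (T1 * T2)) with
  | Some ab => if g ab.1 ab.2 == t then X1 @^-1` [set ab.1] `&` X2 @^-1` [set ab.2]
               else set0
  | None => set0 end.
have -> : (fun om => g (X1 om) (X2 om)) @^-1` [set t] = \bigcup_i S i.
  apply/seteqP; split => om /=.
    move=> H; exists (pickle (X1 om, X2 om)) => //.
    by rewrite /S pickleK /= H eqxx.
  move=> [i _]; rewrite /S; case: (unpickle i) => // -[a b] /=.
  by case: eqP => // E [/= A B]; rewrite -E A B.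
apply: bigcupT_measurable => i; rewrite /S; case: (unpickle i) => // -[a b] /=.
by case: eqP => _ //; apply: measurableI.
Qed.

Lemma Fm_thetainvn (T : countType) (X : Om -> T) n : Fm X -> Fm (fun om => X (thetainvn n om)).
Proof. by move=> h t; apply: (thetainvn_pre n (h t)). Qed.

Lemma Fm_coord (n : int) : Fm (fun om : Om => om n).
Proof. by move=> t; apply: cyl_meas. Qed.

Variables (odot : seq V -> V * Prefs adj -> seq V).

Definition gstep (w : seq V) (a : Arr adj) := odot (odot w a.1) a.2.

Lemma UseqS (Y : Om -> seq V) n om :
  Useq odot Y n.+1 om = gstep (Useq odot Y n om) (om n%:Z).
Proof.
rewrite /= /step /gstep /V0 /S0 /V1 /S1 thetan_E add0r.
by case: (om n%:Z) => [[a b] [c d]].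
Qed.

Lemma Fm_Useq (Y : Om -> seq V) n : Fm Y -> Fm (Useq odot Y n).
Proof.
move=> hY; elim: n => [|n IH] //.
have -> : Useq odot Y n.+1 = fun om => gstep (Useq odot Y n om) (om n%:Z).
  by apply: funext => om; rewrite UseqS.
exact: Fm_comb IH (Fm_coord _).
Qed.

Lemma Useq_shift (Y : Om -> seq V) a b om1 om2 :
  Useq odot Y a om1 = Useq odot Y b om2 -> thetan a om1 = thetan b om2 ->
  forall j, Useq odot Y (a + j) om1 = Useq odot Y (b + j) om2.
Proof.
move=> h1 h2; elim => [|j IH]; first by rewrite !addn0.
rewrite !addnS /= IH; congr step.
by rewrite /thetan (addnC a) (addnC b) !iterD -/(thetan a om1) -/(thetan b om2) h2.
Qed.


Lemma odot_W w v s : symmetric adj -> irreflexive adj -> admissible odot ->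
  inW adj w -> inW adj (odot w (v, s)) /\ odd (size (odot w (v, s))) = ~~ odd (size w).
Proof.
move=> hsym hirr hadm hw; have [hno hyes] := hadm w v s hw.
case Hh: (has (adj v) w).
  have [k hk [_ ->]] := hyes Hh; split.
    move=> i j hij; case: (hw i j hij) => H; [left|right];
      apply/count_memPn; rewrite mem_cat; apply/negP => /orP [/mem_take|/mem_drop] h;
      by move/count_memPn: H; rewrite h.
  rewrite size_cat size_take hk size_drop.
  have -> : (k + (size w - k.+1) = (size w).-1)%N by lia.
  by case: (size w) hk => // m _ /=; rewrite negbK.
have Hn : ~~ has (adj v) w by rewrite Hh.
rewrite (hno Hn); split; last by rewrite size_rcons.
have nw : forall x, adj v x -> count_mem x w = 0%N.
  move=> x hx; apply/count_memPn; apply/negP => xw.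
  by move/hasPn: Hn => /(_ x xw); rewrite hx.
have cr : forall x, count_mem x (rcons w v) = (count_mem x w + (v == x))%N.
  by move=> x; rewrite -cats1 count_cat /= addn0.
move=> i j hij; rewrite !cr.
case: (eqVneq i v) => [eiv|niv].
  subst i; right; rewrite nw //.
  have : v != j by apply/eqP => evj; rewrite -evj hirr in hij.
  by move/negbTE => ->.
case: (eqVneq j v) => [ejv|njv].
  by subst j; left; rewrite nw; last by rewrite hsym.
by rewrite !addn0; exact: hw.
Qed.

Lemma step_W2 w (om : Om) : symmetric adj -> irreflexive adj -> admissible odot ->
  inW2 adj w -> inW2 adj (step odot w om).
Proof.
move=> hs hi ha [hw hp]; rewrite /step.
have [h1 p1] := odot_W (V0 om) (S0 om) hs hi ha hw.
have [h2 p2] := odot_W (V1 om) (S1 om) hs hi ha h1.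
by split => //; rewrite p2 p1 negbK.
Qed.

Lemma Useq_W2 (Y : Om -> seq V) n (om : Om) : symmetric adj -> irreflexive adj -> admissible odot ->
  (forall om, inW2 adj (Y om)) -> inW2 adj (Useq odot Y n om).
Proof. by move=> hs hi ha hY; elim: n => [|n IH] //=; apply: step_W2. Qed.

Definition Ev (Y : Om -> seq V) (n : nat) : set Om :=
  [set om : Om | forall k : nat, exists l : nat, (l <= n)%N /\
       Aset odot Y l om /\ (thetan k @` Aset odot Y (l + k)) om].

Lemma Ev_mono (Y : Om -> seq V) n m (om : Om) : (n <= m)%N -> Ev Y n om -> Ev Y m om.
Proof.
move=> nm h k; have [l [ln hl]] := h k; exists l; split => //.
exact: leq_trans ln nm.
Qed.

Lemma Ev_meas (Y : Om -> seq V) n : Fm Y -> measurable (Ev Y n).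
Proof.
move=> hY.
pose F (k l : nat) : set Om := if (l <= n)%N then
  Aset odot Y l `&` thetainvn k @^-1` Aset odot Y (l + k) else set0.
have -> : Ev Y n = \bigcap_k \bigcup_l F k l.
  apply/seteqP; split => om /=.
    move=> h k _; have [l [ln [h1 [om2 h2 e]]]] := h k; exists l => //.
    rewrite /F ln; split => //=; rewrite -e thetainvnK //.
  move=> h k; have [l _] := h k I; rewrite /F; case: ifP => // ln [h1 h2].
  exists l; split => //; split => //; exists (thetainvn k om) => //.
  exact: thetanK.
apply: bigcapT_measurable => k; apply: bigcupT_measurable => l; rewrite /F.
case: ifP => _ //; apply: measurableI; first exact: Fm_Useq.
apply: thetainvn_pre; exact: Fm_Useq.
Qed.

Lemma Ev_coupling (Y : Om -> seq V) n (om : Om) : Ev Y n (thetainvn n om) ->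
  forall m, (n <= m)%N -> Useq odot Y m (thetainvn m om) = Useq odot Y n (thetainvn n om).
Proof.
move=> h m nm.
have [l [ln [h1 [om2 h2 e]]]] := h (m - n)%N.
have e2 : om2 = thetainvn (m - n) (thetainvn n om) by rewrite -e thetainvnK.
have sh := @Useq_shift Y l (l + (m - n)) (thetainvn n om) om2.
have := sh _ _ (n - l)%N.
have -> : (l + (m - n) + (n - l) = m)%N by lia.
have -> : (l + (n - l) = n)%N by lia.
move=> ->; last 2 first.
- by rewrite h1 h2.
- by rewrite /thetan iterD -/(thetan (m - n) om2) e.
rewrite e2 /thetainvn -iterD; congr (Useq _ _ _ (iter _ _ _)); lia.
Qed.

End Aux.

Unset Implicit Arguments.

Theorem mainTheorem12 (R : realType) (V : finType) (adj : rel V) (v0 : V)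
  (odot : seq V -> V * Prefs adj -> seq V) (nu : Prefs adj -> R)
  (P : probability (Omega adj v0) R) (Y : Omega adj v0 -> seq V) :
  (* finite connected simple graph *)
  symmetric adj -> irreflexive adj -> (forall x y, connect adj x y) ->
  (* admissible policy *)
  admissible odot ->
  (* (H1') stationarity and ergodicity under the theta *)
  (forall A : set (Omega adj v0), measurable A -> P (theta @^-1` A) = P A) ->
  (forall A : set (Omega adj v0), measurable A -> theta @^-1` A = A -> P A = 0%E \/ P A = 1%E) ->
  (* preference lists have law nu_phi *)
  (forall s, P [set om : Omega adj v0 | S0 om = s] = (nu s)%:E) ->
  (forall s, P [set om : Omega adj v0 | S1 om = s] = (nu s)%:E) ->
  (* mu = (mu^0 + mu^1)/2 has full support *)
  (forall v, (0 < P [set om : Omega adj v0 | V0 om = v] + P [set om : Omega adj v0 | V1 om = v])%E) ->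
  (* Y is a W_2-valued random variable *)
  seq_rv Y -> (forall om, inW2 adj (Y om)) ->
  (* the coupling condition *)
  (fun n : nat => P [set om : Omega adj v0 | forall k : nat, exists l : nat, (l <= n)%N /\
       Aset odot Y l om /\ (thetan k @` Aset odot Y (l + k)) om])
     @ \oo --> 1%E ->
  exists U : Omega adj v0 -> seq V,
    seq_rv U /\ (forall om, inW2 adj (U om)) /\
    {ae P, forall om : Omega adj v0, U (theta om) = step odot (U om) om} /\
    {ae P, forall om : Omega adj v0, exists N : nat, forall n : nat, (N <= n)%N ->
        Useq odot Y n (thetainvn n om) = U om}.
Proof.
move=> hsym hirr _ hadm hstat _ _ _ _ hYm hYW hcvg.
have hinv : forall n (A : set (Omega adj v0)), measurable A -> P (thetainvn n @^-1` A) = P A.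
  elim => [|n IH] A mA //.
  have mB : measurable (thetainv @^-1` A).
    rewrite -[X in measurable X]setTI; exact: thetainv_meas.
  rewrite (_ : thetainvn n.+1 @^-1` A = thetainvn n @^-1` (thetainv @^-1` A)) //.
  rewrite IH // -(hstat _ mB); congr (P _).
  by apply/seteqP; split => om /=; rewrite thetainvK.
pose G n := thetainvn n @^-1` Ev odot Y n.
pose Good := \bigcup_n G n.
have mG n : measurable (G n) := thetainvn_pre n (Ev_meas odot n hYm).
have mGood : measurable Good by apply: bigcupT_measurable.
have PGood : P Good = 1%E.
  have Hle : forall n, (P (Ev odot Y n) <= P Good)%E.
    move=> n; rewrite -(hinv n _ (Ev_meas odot n hYm)).
    apply: le_measure; rewrite ?inE //; first exact: mG.
    by move=> om h; exists n.
  apply/eqP; rewrite eq_le probability_le1 //=.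
  apply: (@cvge_to_le _ _ eventually_filter _ _ _ _ hcvg).
  exact: (@nearW nat \oo _ eventually_filter Hle).
have PC : P (~` Good) = 0%E by rewrite probability_setC // PGood subee.
pose U om := match pselect (exists n, G n om) with
  | left h => Useq odot Y (proj1_sig (cid h)) (thetainvn (proj1_sig (cid h)) om)
  | right _ => [::] end.
have UG : forall n om, G n om -> U om = Useq odot Y n (thetainvn n om).
  move=> n om Gn; rewrite /U; case: pselect => [h|nh]; last by exfalso; apply: nh; exists n.
  case: (cid h) => n' Gn' /=.
  by rewrite -(Ev_coupling Gn' (leq_maxl n' n)) -(Ev_coupling Gn (leq_maxr n' n)).
have UN : forall om, ~ Good om -> U om = [::].
  move=> om nG; rewrite /U; case: pselect => // h; exfalso; apply: nG.
  by case: h => n hn; exists n.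
exists U; split; [|split; [|split]].
- move=> w.
  have -> : U @^-1` [set w] = (\bigcup_n (G n `&`
      (fun om => Useq odot Y n (thetainvn n om)) @^-1` [set w])) `|`
      (if w == [::] then ~` Good else set0).
    apply/seteqP; split => om /=.
      move=> Uw; case: (pselect (Good om)) => [[n _ Gn]|nG].
        by left; exists n => //; split => //; rewrite /preimage /= -(UG n om Gn).
      by right; rewrite -Uw (UN _ nG) eqxx.
    case => [[n _ [Gn hw]]|]; first by rewrite /preimage /= (UG n om Gn).
    by case: eqP => // -> nG; exact: UN.
  apply: measurableU.
    apply: bigcupT_measurable => n; apply: measurableI => //.
    exact: (Fm_thetainvn n (Fm_Useq odot n hYm)).
  by case: eqP => _ //; apply: measurableC.
- move=> om; case: (pselect (Good om)) => [[n _ Gn]|nG].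
    by rewrite (UG n om Gn); apply: Useq_W2.
  by rewrite UN //; split => // i j _; left.
- exists (~` Good); split => //; first exact: measurableC.
  move=> om /= hn hG; apply: hn; case: hG => n _ Gn.
  have E : thetainvn n.+1 (theta om) = thetainvn n om.
    by rewrite /thetainvn iterSr thetainvK.
  have Gn1 : G n.+1 (theta om).
    by change (Ev odot Y n.+1 (thetainvn n.+1 (theta om))); rewrite E; apply: (Ev_mono (leqnSn n)).
  by rewrite (UG _ _ Gn1) (UG _ _ Gn) E /= thetanK.
- exists (~` Good); split => //; first exact: measurableC.
  move=> om /= hn hG; apply: hn; case: hG => n _ Gn.
  by exists n => m nm; rewrite (Ev_coupling Gn nm) -(UG n om Gn).
Qed.
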